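(* Let $n$ be a positive integer and let $\Omega_1,\Omega_2$ be two distinct copies of $2^{[n]}$. For $i=1,2$ let $\bm{p}_i=(p_i^{(1)},\dots,p_i^{(n)})$ be a probability vector (i.e. $0<p_i^{(\ell)}<1$), write $p_i:=p_i^{(1)}$, and let $\mu_i$ be the product measure on $\Omega_i$, $\mu_i(U)=\sum_{x\in U}\prod_{\ell\in x}p_i^{(\ell)}\prod_{k\in[n]\setminus x}(1-p_i^{(k)})$. Assume that $p_i=\max\{p_i^{(\ell)}:\ell\in[n]\}$ for $i=1,2$, that $p_1\geqslant p_2$, and that $p_1\leqslant 1/2$. If $U_1\subset\Omega_1$, $U_2\subset\Omega_2$ are cross-intersecting (i.e. $x\cap y\neq\emptyset$ for all $x\in U_1$, $y\in U_2$), then $\mu_1(U_1)\mu_2(U_2)\leqslant p_1p_2$.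
   Context: A probability vector is a vector with all coordinates strictly between $0$ and $1$. *)

(* Defs.v *)
From mathcomp Require Import all_boot all_order all_algebra.
Set Implicit Arguments. Unset Strict Implicit. Unset Printing Implicit Defensive.
Import Order.TTheory GRing.Theory Num.Theory.
Local Open Scope ring_scope.

(* Omega = 2^[n] is {set 'I_n}; a family U is {set {set 'I_n}}. *)

Definition prob_vector (R : realFieldType) (n : nat) (p : 'I_n -> R) : Prop :=
  forall l : 'I_n, 0 < p l < 1.

Definition prod_measure (R : realFieldType) (n : nat) (p : 'I_n -> R)
    (U : {set {set 'I_n}}) : R :=
  \sum_(x in U) ((\prod_(l in x) p l) * \prod_(k in ~: x) (1 - p k)).

Definition cross_intersecting (n : nat) (U1 U2 : {set {set 'I_n}}) : Prop :=
  forall x y, x \in U1 -> y \in U2 -> x :&: y != set0.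

(* Main.v *)
Require Import Defs.
From mathcomp Require Import all_boot all_order all_algebra.
From mathcomp Require Import ring lra.
Set Implicit Arguments. Unset Strict Implicit. Unset Printing Implicit Defensive.
Import Order.TTheory GRing.Theory Num.Theory.
Local Open Scope ring_scope.


Ltac pos := repeat first [ assumption | apply: mulr_ge0 | apply: exprn_ge0 ].

Section RealPart.
Variable R : realFieldType.
Variables a b : R.
Hypothesis hb : 0 < b.
Hypothesis hba : b <= a.
Hypothesis ha : a <= 1/2.

Lemma fa0 : 0 <= a. Proof. move: (hb) (hba) => *; lra. Qed.
Lemma fa0' : 0 < a. Proof. move: (hb) (hba) => *; lra. Qed.
Lemma fa1 : 0 <= 1 - a. Proof. move: (hb) (hba) (ha) => *; lra. Qed.
Lemma fa1' : 0 < 1 - a. Proof. move: (hb) (hba) (ha) => *; lra. Qed.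
Lemma fb0 : 0 <= b. Proof. move: (hb) => *; lra. Qed.
Lemma fb1 : 0 <= 1 - b. Proof. move: (hb) (hba) (ha) => *; lra. Qed.
Lemma fb1' : 0 < 1 - b. Proof. move: (hb) (hba) (ha) => *; lra. Qed.
Lemma fa2 : 0 <= 1 - 2*a. Proof. move: (ha) => *; lra. Qed.
Lemma fb2 : 0 <= 1 - 2*b. Proof. move: (hba) (ha) => *; lra. Qed.
Lemma fab : 0 < a * b. Proof. apply: mulr_gt0; [exact: fa0'|exact: hb]. Qed.
Lemma fc : 0 < (1-a)*(1-b). Proof. apply: mulr_gt0; [exact: fa1'|exact: fb1']. Qed.

Ltac facts := have a0 := fa0; have a0' := fa0'; have a1 := fa1; have a1' := fa1';
  have b0 := fb0; have b0' := hb; have b1 := fb1; have b1' := fb1'; have a2 := fa2; have b2 := fb2;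
  have ab0 := fab; have c0 := fc; have ab0' := ltW fab; have c0' := ltW fc.

Definition Hof (x y : R) := (1-a)*(1-b)*(x*y) <= a*b*((1-x)*(1-y)).
Definition Gin (x y : R) := (1-b)^+2*(x*y) <= b*(a - b*x)*(1-y).
Definition Rinv x y := Hof x y /\ Gin x y.

Lemma hof_step x0 x1 y0 y1 :
  0 <= x0 -> x0 <= x1 -> x1 <= 1 -> 0 <= y0 -> y0 <= y1 -> y1 <= 1 ->
  Hof x0 y1 -> Hof x1 y0 ->
  Hof ((1-a)*x0 + a*x1) ((1-b)*y0 + b*y1).
Proof.
facts.
rewrite /Hof => hx0 hx01 hx1 hy0 hy01 hy1 HP HQ.
have ex1 : 0 <= 1 - x1 by lra.
have ex0 : 0 <= 1 - x0 by lra.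
have ey1 : 0 <= 1 - y1 by lra.
have ey0 : 0 <= 1 - y0 by lra.
have hx1' : 0 <= x1 by lra.
have hy1' : 0 <= y1 by lra.
set c := (1-a)*(1-b) in HP HQ c0 c0' *; set d := a*b in HP HQ ab0 ab0' *.
have dc : d <= c.
  rewrite /c /d -subr_ge0.
  have -> : (1 - a) * (1 - b) - a * b = 1 - a - b by ring.
  lra.
have s1 : x1 + y0 <= 1.
  have : c * (x1*y0) <= c * ((1-x1)*(1-y0)).
    apply: le_trans HQ _; apply: ler_wpM2r; [pos|exact: dc].
  rewrite ler_pM2l // => h.
  have e : (1 - x1) * (1 - y0) = 1 - x1 - y0 + x1*y0 by ring.
  lra.
have s2 : x0 + y1 <= 1.
  have : c * (x0*y1) <= c * ((1-x0)*(1-y1)).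
    apply: le_trans HP _; apply: ler_wpM2r; [pos|exact: dc].
  rewrite ler_pM2l // => h.
  have e : (1 - x0) * (1 - y1) = 1 - x0 - y1 + x0*y1 by ring.
  lra.
set g := x0*y0; set h := x1*y1; set G := (1-x0)*(1-y0); set H := (1-x1)*(1-y1).
have fi : c * g <= d * G.
  have : c*g <= c*(x1*y0) by rewrite /g; apply: ler_wpM2l => //; apply: ler_wpM2r.
  move/le_trans; apply; apply: le_trans HQ _; rewrite /G; apply: ler_wpM2l => //.
  apply: ler_wpM2r => //; lra.
have fii : (c*(x0*y1))*(c*(x1*y0)) <= (d*((1-x0)*(1-y1)))*(d*((1-x1)*(1-y0))).
  by apply: ler_pM => //; pos.
have fii' : c^+2*(g*h) <= d^+2*(G*H).
  have e1 : c^+2*(g*h) = (c*(x0*y1))*(c*(x1*y0)) by rewrite /g /h; ring.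
  have e2 : d^+2*(G*H) = (d*((1-x0)*(1-y1)))*(d*((1-x1)*(1-y0))) by rewrite /G /H; ring.
  by rewrite e1 e2.
have fiii : h <= G.
  rewrite /h /G mulrC; apply: ler_pM => //; lra.
have diag : c^+2*g + c*d*h <= c*d*G + d^+2*H.
  have H0 : 0 <= H by rewrite /H; pos.
  have G0 : 0 <= G by rewrite /G; pos.
  case: (lerP (c*h) (d*H)) => hc.
    have k1 : c*(c*g) <= c*(d*G) by apply: ler_wpM2l.
    have k2 : d*(c*h) <= d*(d*H) by apply: ler_wpM2l.
    have e1 : c^+2*g + c*d*h = c*(c*g) + d*(c*h) by ring.
    have e2 : c*d*G + d^+2*H = c*(d*G) + d*(d*H) by ring.
    rewrite e1 e2; exact: lerD.
  have h0 : 0 < h.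
    have : 0 < c*h by apply: le_lt_trans hc; pos.
    by rewrite pmulr_rgt0.
  have key : 0 <= h * ((c*d*G + d^+2*H) - (c^+2*g + c*d*h)).
    have e : h * ((c*d*G + d^+2*H) - (c^+2*g + c*d*h)) =
      (d^+2*(G*H) - c^+2*(g*h)) + d*(G-h)*(c*h - d*H) by ring.
    rewrite e; apply: addr_ge0; first by rewrite subr_ge0.
    pos; rewrite subr_ge0 //; exact: ltW.
  by move: key; rewrite pmulr_rge0 // subr_ge0.
have e : c*(((1-a)*x0 + a*x1)*((1-b)*y0 + b*y1)) - d*((1-((1-a)*x0 + a*x1))*(1-((1-b)*y0 + b*y1)))
   = (1-a)*b*(c*(x0*y1) - d*((1-x0)*(1-y1))) + a*(1-b)*(c*(x1*y0) - d*((1-x1)*(1-y0)))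
     + (c^+2*g + c*d*h - (c*d*G + d^+2*H)) by rewrite /c /d /g /h /G /H; ring.
rewrite -subr_le0 e.
have t1 : (1-a)*b*(c*(x0*y1) - d*((1-x0)*(1-y1))) <= 0.
  apply: mulr_ge0_le0; [pos|by rewrite subr_le0].
have t2 : a*(1-b)*(c*(x1*y0) - d*((1-x1)*(1-y0))) <= 0.
  apply: mulr_ge0_le0; [pos|by rewrite subr_le0].
have t3 : c^+2*g + c*d*h - (c*d*G + d^+2*H) <= 0 by rewrite subr_le0.
by have := lerD (lerD t1 t2) t3; rewrite !addr0.
Qed.
Definition Ef (y : R) := b^+2 + (1-2*b)*y.
Definition Ff (y : R) := a*b + (1-a-b)*y.

Lemma GinE x y : Gin x y <-> x * Ef y <= a*b*(1-y).
Proof.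
rewrite /Gin /Ef -subr_ge0 -[x * _ <= _]subr_ge0.
have -> : b * (a - b * x) * (1 - y) - (1 - b) ^+ 2 * (x * y) =
  a * b * (1 - y) - x * (b ^+ 2 + (1 - 2 * b) * y) by ring.
by [].
Qed.

Lemma HofE x y : Hof x y <-> x * Ff y <= a*b*(1-y).
Proof.
rewrite /Hof /Ff -subr_ge0 -[x * _ <= _]subr_ge0.
have -> : a * b * ((1 - x) * (1 - y)) - (1 - a) * (1 - b) * (x * y) =
  a * b * (1 - y) - x * (a * b + (1 - a - b) * y) by ring.
by [].
Qed.

Lemma combine (L1 L2 M1 M2 T Z : R) :
  L1 <= M1 -> L2 <= M2 -> M1 + M2 = T - Z -> 0 <= Z -> L1 + L2 <= T.
Proof. move=> h1 h2 e hz; have := lerD h1 h2; rewrite e => h; lra. Qed.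

Lemma G_step x0 x1 y0 y1 :
  0 <= x0 -> x0 <= x1 -> x1 <= 1 -> 0 <= y0 -> y0 <= y1 -> y1 <= 1 ->
  Rinv x0 y1 -> Rinv x1 y0 ->
  Gin ((1-a)*x0 + a*x1) ((1-b)*y0 + b*y1).
Proof.
move=> hx0 hx01 hx1 hy0 hy01 hy1 [HP GP] [HQ GQ].
have HO := hof_step hx0 hx01 hx1 hy0 hy01 hy1 HP HQ.
move: (hba) (ha) => hba' ha'.
facts.
have hx1' : 0 <= x1 by lra.
have hy1' : 0 <= y1 by lra.
have ey1 : 0 <= 1 - y1 by lra.
have ey0 : 0 <= 1 - y0 by lra.
set X := (1-a)*x0 + a*x1 in HO *; set Y := (1-b)*y0 + b*y1 in HO *.
have X0 : 0 <= X by rewrite /X; apply: addr_ge0; pos.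
have Y1 : Y <= 1.
  have k1 : (1-b)*y0 <= (1-b)*1 by apply: ler_wpM2l => //; lra.
  have k2 : b*y1 <= b*1 by apply: ler_wpM2l.
  rewrite /Y; lra.
have Y0 : 0 <= Y by rewrite /Y; apply: addr_ge0; pos.
have eY : 0 <= 1 - Y by lra.
apply/GinE; move/HofE: HO => HO.
case: (lerP ((a-b)*(Y-b)) 0) => hab.
  apply: le_trans HO; apply: ler_wpM2l => //.
  rewrite /Ef /Ff -subr_ge0.
  have -> : a * b + (1 - a - b) * Y - (b ^+ 2 + (1 - 2 * b) * Y) = - ((a-b)*(Y-b)) by ring.
  by rewrite oppr_ge0.
have ab' : b < a.
  rewrite lt_neqAle hba' andbT; apply/eqP => e.
  by move: hab; rewrite e subrr mul0r ltxx.
have Yb : b < Y by move: hab; rewrite pmulr_rgt0 ?subr_gt0.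
have Yb' : 0 <= Y - b by rewrite subr_ge0 ltW.
have Epos : forall y, 0 <= y -> 0 < Ef y.
  move=> y hy; rewrite /Ef.
  have h1 : 0 < b^+2 by apply: exprn_gt0.
  have h2 : 0 <= (1-2*b)*y by pos.
  lra.
have EY : 0 < Ef Y by apply: Epos.
have EY' := ltW EY.
set c := (1-a)*(1-b) in c0 c0' *; set d := a*b in ab0 ab0' *.
case: (lerP b y0) => hu.
  move/GinE: GP => GP; move/GinE: GQ => GQ.
  have Eu := Epos _ hy0; have Ev := Epos _ hy1'.
  have Eu' := ltW Eu; have Ev' := ltW Ev.
  have cE : 0 <= c * Ef y0 - d * Ef y1.
    have k1 : c * (b * (1 - b)) <= c * Ef y0.
      apply: ler_wpM2l => //.
      rewrite /Ef -subr_ge0.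
      have -> : b ^+ 2 + (1 - 2 * b) * y0 - b * (1 - b) = (1-2*b)*(y0-b) by ring.
      by pos; rewrite subr_ge0.
    have k2 : d * Ef y1 <= d * ((1-b)^+2).
      apply: ler_wpM2l => //.
      rewrite /Ef -subr_ge0.
      have -> : (1 - b) ^+ 2 - (b ^+ 2 + (1 - 2 * b) * y1) = (1-2*b)*(1-y1) by ring.
      by pos.
    have k3 : d * ((1-b)^+2) <= c * (b * (1 - b)).
      rewrite /c /d -subr_ge0.
      have -> : (1 - a) * (1 - b) * (b * (1 - b)) - a * b * (1 - b) ^+ 2 = b * (1-b)^+2 * (1 - 2*a) by ring.
      by pos.
    rewrite subr_ge0; apply: le_trans k2 _; exact: le_trans k3 k1.
  have Qa : 0 <= (1-Y)*Ef y0*Ef y1 - (1-a)*(1-y1)*Ef y0*Ef Y - a*(1-y0)*Ef y1*Ef Y.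
    have -> : (1-Y)*Ef y0*Ef y1 - (1-a)*(1-y1)*Ef y0*Ef Y - a*(1-y0)*Ef y1*Ef Y
       = (1-b)^+2 * (y1 - y0) * (c * Ef y0 - d * Ef y1) by rewrite /Ef /Y /c /d; ring.
    by pos; rewrite subr_ge0.
  rewrite -(ler_pM2r (mulr_gt0 Eu Ev)).
  have e : X * Ef Y * (Ef y0 * Ef y1) = (1-a)*Ef Y*Ef y0*(x0 * Ef y1) + a*Ef Y*Ef y1*(x1*Ef y0)
    by rewrite /X; ring.
  rewrite e.
  have k1 : (1-a)*Ef Y*Ef y0*(x0 * Ef y1) <= (1-a)*Ef Y*Ef y0*(a*b*(1-y1)).
    by apply: ler_wpM2l => //; pos.
  have k2 : a*Ef Y*Ef y1*(x1 * Ef y0) <= a*Ef Y*Ef y1*(a*b*(1-y0)).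
    by apply: ler_wpM2l => //; pos.
  apply: (combine k1 k2 _ (mulr_ge0 ab0' Qa)); rewrite /d; ring.
move/GinE: GP => GP; move/HofE: HQ => HQ.
have Ev : 0 < Ef y1 by apply: Epos.
have Ev' := ltW Ev.
have Fu : 0 < Ff y0.
  rewrite /Ff.
  have h2 : 0 <= (1-a-b)*y0 by apply: mulr_ge0 => //; lra.
  have := fab; lra.
have Fu' := ltW Fu.
have u0 : 0 < y0.
  have k2 : b*y1 <= b*1 by apply: ler_wpM2l.
  have : 0 < (1-b)*y0 by rewrite /Y in Yb; lra.
  by rewrite pmulr_rgt0.
have bu : 0 <= b - y0 by rewrite subr_ge0 ltW.
have Qb : 0 <= (1-Y)*Ef y1*Ff y0 - (1-a)*(1-y1)*Ff y0*Ef Y - a*(1-y0)*Ef y1*Ef Y.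
  have f1 : 0 <= (Y-b)*(1-y1)*y0*(Ff y0+(1-y0)*(1-2*b))*a*(1-2*b).
    by pos; apply: addr_ge0; pos.
  have f2 : 0 <= (1-y1)*y0*(b-y0)*((1-b)^+2-a*b).
    pos.
    have k : a*b <= (1/2)*b by apply: ler_wpM2r.
    have -> : (1 - b) ^+ 2 - a * b = (1-2*b)*(1-b/2) + ((1/2)*b - a*b) by field.
    apply: addr_ge0; [apply: mulr_ge0 => //; lra|]; by rewrite subr_ge0.
  have f3 : 0 <= (Y-b)*y0*(1-y0)*(1-2*a) by pos.
  have e : y0 * ((1-Y)*Ef y1*Ff y0 - (1-a)*(1-y1)*Ff y0*Ef Y - a*(1-y0)*Ef y1*Ef Y)
    = c * ((1-y1)*y0*(b-y0)*((1-b)^+2-a*b)) + (1-b)^+3 * ((Y-b)*y0*(1-y0)*(1-2*a))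
      + (Y-b)*(1-y1)*y0*(Ff y0+(1-y0)*(1-2*b))*a*(1-2*b)
    by rewrite /Y /Ef /Ff /c; ring.
  have : 0 <= y0 * ((1-Y)*Ef y1*Ff y0 - (1-a)*(1-y1)*Ff y0*Ef Y - a*(1-y0)*Ef y1*Ef Y).
    by rewrite e; apply: addr_ge0; [apply: addr_ge0|] => //; pos.
  by rewrite pmulr_rge0.
rewrite -(ler_pM2r (mulr_gt0 Ev Fu)).
have e : X * Ef Y * (Ef y1 * Ff y0) = (1-a)*Ef Y*Ff y0*(x0 * Ef y1) + a*Ef Y*Ef y1*(x1*Ff y0)
  by rewrite /X; ring.
rewrite e.
have k1 : (1-a)*Ef Y*Ff y0*(x0 * Ef y1) <= (1-a)*Ef Y*Ff y0*(a*b*(1-y1)).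
  by apply: ler_wpM2l => //; pos.
have k2 : a*Ef Y*Ef y1*(x1 * Ff y0) <= a*Ef Y*Ef y1*(a*b*(1-y0)).
  by apply: ler_wpM2l => //; pos.
apply: (combine k1 k2 _ (mulr_ge0 ab0' Qb)); rewrite /d; ring.
Qed.

Lemma Rinv_down x y x' y' :
  0 <= x -> x <= x' -> x' <= 1 -> 0 <= y -> y <= y' -> y' <= 1 ->
  Rinv x' y' -> Rinv x y.
Proof.
move=> hx hxx hx1 hy hyy hy1 [H1 G1]; move: (hba) => hba'; facts; split.
  rewrite /Hof in H1 *.
  have k1 : x*y <= x'*y' by apply: ler_pM.
  have k2 : (1-x')*(1-y') <= (1-x)*(1-y) by apply: ler_pM; lra.
  apply: le_trans (ler_wpM2l c0' k1) _; apply: le_trans H1 _; exact: ler_wpM2l.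
rewrite /Gin in G1 *.
have k1 : x*y <= x'*y' by apply: ler_pM.
have bx : b*x' <= b*1 by apply: ler_wpM2l.
have bx' : b*x <= b*x' by apply: ler_wpM2l.
have k2 : b*(a - b*x')*(1-y') <= b*(a-b*x)*(1-y).
  apply: ler_pM; try lra.
    apply: mulr_ge0 => //; lra.
  apply: ler_wpM2l => //; lra.
apply: le_trans k2; apply: le_trans G1; apply: ler_wpM2l => //; pos.
Qed.

Lemma Rinv_prod x y : 0 <= x -> 0 <= y -> Rinv x y -> x * y <= a * b.
Proof.
move=> hx hy [_ G1]; move/GinE: G1; rewrite /Ef => G1; facts.
case: (lerP (x*y) (a*b)) => // hxy; exfalso.
have s0 : 0 <= (b*x - a*y)^+2 by apply: sqr_ge0.
have k : 4*(a*b)*(a*b) < (b*x + a*y)^+2.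
  have : 4*(a*b)*(a*b) < 4*(a*b)*(x*y).
    rewrite ltr_pM2l //; apply: mulr_gt0 => //; lra.
  have -> : (b * x + a * y) ^+ 2 = (b*x - a*y)^+2 + 4*(a*b)*(x*y) by ring.
  lra.
have k2 : 2*(a*b) < b*x + a*y.
  have p1 : 0 <= b*x + a*y by apply: addr_ge0; pos.
  have p2 : 0 <= 2*(a*b) by apply: mulr_ge0 => //; lra.
  rewrite ltNge; apply/negP => hle.
  have := ler_pM p1 p1 hle hle.
  have -> : 2 * (a * b) * (2 * (a * b)) = 4*(a*b)*(a*b) by ring.
  rewrite -expr2 => h; lra.
have k3 : (1-2*b)*(a*b) <= (1-2*b)*(x*y) by apply: ler_wpM2l => //; exact: ltW.
have k5 : b*(2*(a*b)) < b*(b*x + a*y) by rewrite ltr_pM2l.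
have e : x * (b ^+ 2 + (1 - 2 * b) * y) = (1-2*b)*(x*y) + b*(b*x + a*y) - a*b*y by ring.
have e2 : a*b*(1-y) = (1-2*b)*(a*b) + b*(2*(a*b)) - a*b*y by ring.
move: G1; rewrite e e2; lra.
Qed.

End RealPart.



Section Comb.
Variable R : realFieldType.

Definition W n (p : 'I_n -> R) (x : {set 'I_n}) :=
  \prod_(l < n) (if l \in x then p l else 1 - p l).

Lemma prod_measureE n (p : 'I_n -> R) U : prod_measure p U = \sum_(x in U) W p x.
Proof.
apply: eq_bigr => x _; rewrite /W [RHS](bigID (fun l => l \in x)) /=.
congr (_ * _); first by apply: eq_bigr => l ->.
apply: eq_big => [l|l]; first by rewrite in_setC.
by rewrite in_setC => /negbTE ->.
Qed.

Definition emb n (bb : bool) (y : {set 'I_n}) : {set 'I_n.+1} :=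
  [set j | if unlift ord0 j is Some i then i \in y else bb].
Definition slice n (bb : bool) (U : {set {set 'I_n.+1}}) : {set {set 'I_n}} :=
  [set y | emb bb y \in U].
Definition pre n (x : {set 'I_n.+1}) : {set 'I_n} := [set i | lift ord0 i \in x].

Lemma emb_bij n : bijective (fun q : bool * {set 'I_n} => emb q.1 q.2).
Proof.
exists (fun x : {set 'I_n.+1} => (ord0 \in x, pre x)).
  case=> bb y /=; congr pair; first by rewrite inE unlift_none.
  by apply/setP => i; rewrite !inE liftK.
move=> x /=; apply/setP => j; rewrite inE.
case: (unliftP ord0 j) => [i ->|->] //.
by rewrite inE.
Qed.

Lemma sum_split n (F : {set 'I_n.+1} -> R) :
  \sum_(x : {set 'I_n.+1}) F x = \sum_(y : {set 'I_n}) F (emb false y) + \sum_(y : {set 'I_n}) F (emb true y).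
Proof.
rewrite (reindex (fun q : bool * {set 'I_n} => emb q.1 q.2)) /=; last first.
  by apply: onW_bij; exact: emb_bij.
rewrite -(pair_big (fun _ => true) (fun _ => true) (fun i j => F (emb i j))) /=.
by rewrite big_bool /= addrC.
Qed.

Lemma W_emb n (p : 'I_n.+1 -> R) bb y :
  W p (emb bb y) = (if bb then p ord0 else 1 - p ord0) * W (fun i : 'I_n => p (lift ord0 i)) y.
Proof.
rewrite /W big_ord_recl inE unlift_none; congr (_ * _).
by apply: eq_bigr => i _; rewrite inE liftK.
Qed.

Lemma measure_split n (p : 'I_n.+1 -> R) U :
  prod_measure p U = (1 - p ord0) * prod_measure (fun i : 'I_n => p (lift ord0 i)) (slice false U)
                     + p ord0 * prod_measure (fun i : 'I_n => p (lift ord0 i)) (slice true U).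
Proof.
rewrite !prod_measureE big_mkcond sum_split.
congr (_ + _); rewrite big_distrr /= [RHS]big_mkcond; apply: eq_bigr => y _;
  rewrite inE W_emb /=; by case: ifP => _; rewrite ?mulr0.
Qed.

Lemma measure_ge0 n (p : 'I_n -> R) (U : {set {set 'I_n}}) : (forall l, 0 <= p l <= 1) -> 0 <= prod_measure p U.
Proof.
move=> hp; rewrite prod_measureE; apply: sumr_ge0 => x _; apply: prodr_ge0 => l _.
by case: ifP => _; have := hp l; rewrite ?subr_ge0 => /andP[].
Qed.

Lemma measure_sub n (p : 'I_n -> R) (U V : {set {set 'I_n}}) : (forall l, 0 <= p l <= 1) -> U \subset V ->
  prod_measure p U <= prod_measure p V.
Proof.
move=> hp hUV; rewrite !prod_measureE [X in _ <= X](big_setID U) /= (setIidPr hUV).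
rewrite lerDl; apply: sumr_ge0 => x _; apply: prodr_ge0 => l _.
by case: ifP => _; have := hp l; rewrite ?subr_ge0 => /andP[].
Qed.

Lemma measure_T n (p : 'I_n -> R) : prod_measure p [set: {set 'I_n}] = 1.
Proof.
elim: n p => [|n IH] p.
  rewrite prod_measureE (big_pred1 set0) /W ?big_ord0 //.
  by move=> x; rewrite !inE; symmetry; apply/eqP/setP => -[m hm].
rewrite measure_split.
have -> : slice false [set: {set 'I_n.+1}] = [set: {set 'I_n}] by apply/setP => y; rewrite !inE.
have -> : slice true [set: {set 'I_n.+1}] = [set: {set 'I_n}] by apply/setP => y; rewrite !inE.
by rewrite !IH !mulr1 subrK.
Qed.

Lemma measure_le1 n (p : 'I_n -> R) (U : {set {set 'I_n}}) : (forall l, 0 <= p l <= 1) -> prod_measure p U <= 1.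
Proof. by move=> hp; rewrite -(measure_T p); apply: measure_sub => //; apply: subsetT. Qed.

Lemma slice_cross n (U1 U2 : {set {set 'I_n.+1}}) b1 b2 :
  cross_intersecting U1 U2 -> ~~ (b1 && b2) -> cross_intersecting (slice b1 U1) (slice b2 U2).
Proof.
move=> hc hb x y; rewrite !inE => hx hy.
have := hc _ _ hx hy; apply: contra => /eqP hxy; apply/eqP/setP => j.
rewrite !inE; case: (unliftP ord0 j) => [i _|_].
  by move/setP: hxy => /(_ i); rewrite !inE => ->.
by apply/negbTE.
Qed.

Lemma cross_Ur n (U V1 V2 : {set {set 'I_n}}) :
  cross_intersecting U V1 -> cross_intersecting U V2 -> cross_intersecting U (V1 :|: V2).
Proof. by move=> h1 h2 x y hx; rewrite inE => /orP[]; [exact: h1|exact: h2]. Qed.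

Lemma cross_Ul n (U1 U2 V : {set {set 'I_n}}) :
  cross_intersecting U1 V -> cross_intersecting U2 V -> cross_intersecting (U1 :|: U2) V.
Proof. by move=> h1 h2 x y; rewrite inE => /orP[]; [exact: h1|exact: h2]. Qed.

End Comb.



Section Main.
Variable R : realFieldType.

Lemma all_set0 (x : {set 'I_0}) : x = set0.
Proof. by apply/setP => -[m hm]. Qed.

Lemma empty_fam (U : {set {set 'I_0}}) : set0 \notin U -> U = set0.
Proof. by move=> h; apply/setP => x; rewrite inE (all_set0 x); apply/negbTE. Qed.

Lemma Rinv_0l (a b y : R) : 0 < b -> b <= a -> 0 <= y <= 1 -> Rinv a b 0 y.
Proof.
move=> hb hba /andP[hy0 hy1]; split; rewrite /Hof /Gin !mul0r ?mulr0.
  apply: mulr_ge0; [apply: mulr_ge0; lra|]; rewrite subr0 mul1r; lra.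
apply: mulr_ge0; [apply: mulr_ge0; lra|lra].
Qed.

Lemma Rinv_0r (a b x : R) : 0 < b -> b <= a -> 0 <= x <= 1 -> Rinv a b x 0.
Proof.
move=> hb hba /andP[hx0 hx1]; split; rewrite /Hof /Gin !mulr0.
  apply: mulr_ge0; [apply: mulr_ge0; lra|]; rewrite subr0 mulr1; lra.
rewrite subr0 mulr1; apply: mulr_ge0; first lra.
have : b * x <= b * 1 by apply: ler_wpM2l; lra.
lra.
Qed.

Lemma main_ind (a b : R) (hb : 0 < b) (hba : b <= a) (ha : a <= 1/2) n :
  forall (p1 p2 : 'I_n -> R) (U1 U2 : {set {set 'I_n}}),
  (forall l, 0 <= p1 l <= a) -> (forall l, 0 <= p2 l <= b) ->
  cross_intersecting U1 U2 -> Rinv a b (prod_measure p1 U1) (prod_measure p2 U2).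
Proof.
elim: n => [|n IH] p1 p2 U1 U2 hp1 hp2 hc.
  have hq1 : forall l, 0 <= p1 l <= 1 by move=> l; case/andP: (hp1 l) => *; apply/andP; split; lra.
  have hq2 : forall l, 0 <= p2 l <= 1 by move=> l; case/andP: (hp2 l) => *; apply/andP; split; lra.
  case: (boolP (set0 \in U1)) => h1.
    have h2 : set0 \notin U2.
      apply/negP => h2; have := hc _ _ h1 h2; by rewrite setI0 eqxx.
    rewrite (empty_fam h2) [prod_measure p2 _]prod_measureE big_set0.
    apply: Rinv_0r => //; apply/andP; split; [exact: measure_ge0|exact: measure_le1].
  rewrite (empty_fam h1) [prod_measure p1 _]prod_measureE big_set0.
  apply: Rinv_0l => //; apply/andP; split; [exact: measure_ge0|exact: measure_le1].
have hq1 : forall l, 0 <= p1 l <= 1 by move=> l; case/andP: (hp1 l) => *; apply/andP; split; lra.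
have hq2 : forall l, 0 <= p2 l <= 1 by move=> l; case/andP: (hp2 l) => *; apply/andP; split; lra.
set p1' := fun i : 'I_n => p1 (lift ord0 i).
set p2' := fun i : 'I_n => p2 (lift ord0 i).
have hp1' : forall l, 0 <= p1' l <= a by move=> l; exact: hp1.
have hp2' : forall l, 0 <= p2' l <= b by move=> l; exact: hp2.
have hq1' : forall l, 0 <= p1' l <= 1 by move=> l; exact: hq1.
have hq2' : forall l, 0 <= p2' l <= 1 by move=> l; exact: hq2.
rewrite (measure_split p1 U1) (measure_split p2 U2) -/p1' -/p2'.
set S1f := slice false U1; set S1t := slice true U1.
set S2f := slice false U2; set S2t := slice true U2.
have R1 : Rinv a b (prod_measure p1' S1f) (prod_measure p2' (S2f :|: S2t)).
  by apply: IH => //; apply: cross_Ur; apply: slice_cross.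
have R2 : Rinv a b (prod_measure p1' (S1f :|: S1t)) (prod_measure p2' S2f).
  by apply: IH => //; apply: cross_Ul; apply: slice_cross.
set A0 := prod_measure p1' S1f; set A1 := prod_measure p1' S1t.
set x1 := prod_measure p1' (S1f :|: S1t).
set B0 := prod_measure p2' S2f; set B1 := prod_measure p2' S2t.
set y1 := prod_measure p2' (S2f :|: S2t).
have A0x1 : A0 <= x1 by apply: measure_sub => //; exact: subsetUl.
have A1x1 : A1 <= x1 by apply: measure_sub => //; exact: subsetUr.
have B0y1 : B0 <= y1 by apply: measure_sub => //; exact: subsetUl.
have B1y1 : B1 <= y1 by apply: measure_sub => //; exact: subsetUr.
have A00 : 0 <= A0 by exact: measure_ge0.
have A10 : 0 <= A1 by exact: measure_ge0.
have B00 : 0 <= B0 by exact: measure_ge0.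
have B10 : 0 <= B1 by exact: measure_ge0.
have x11 : x1 <= 1 by exact: measure_le1.
have y11 : y1 <= 1 by exact: measure_le1.
have q1 := hp1 ord0; have q2 := hp2 ord0.
move: q1 q2 => /andP[q10 q1a] /andP[q20 q2b].
have HS := hof_step hb hba ha A00 A0x1 x11 B00 B0y1 y11 R1.1 R2.1.
have GS := G_step hb hba ha A00 A0x1 x11 B00 B0y1 y11 R1 R2.
apply: (Rinv_down hb hba ha _ _ _ _ _ _ (conj HS GS)).
- apply: addr_ge0; apply: mulr_ge0; lra.
- have k1 : p1 ord0 * A1 <= p1 ord0 * x1 by apply: ler_wpM2l.
  have k2 : p1 ord0 * (x1 - A0) <= a * (x1 - A0) by apply: ler_wpM2r; lra.
  lra.
- have k1 : a * x1 <= a * 1 by apply: ler_wpM2l; lra.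
  have k2 : (1-a) * A0 <= (1-a) * 1 by apply: ler_wpM2l; lra.
  lra.
- apply: addr_ge0; apply: mulr_ge0; lra.
- have k1 : p2 ord0 * B1 <= p2 ord0 * y1 by apply: ler_wpM2l.
  have k2 : p2 ord0 * (y1 - B0) <= b * (y1 - B0) by apply: ler_wpM2r; lra.
  lra.
- have k1 : b * y1 <= b * 1 by apply: ler_wpM2l; lra.
  have k2 : (1-b) * B0 <= (1-b) * 1 by apply: ler_wpM2l; lra.
  lra.
Qed.
End Main.

Theorem lemma1 (R : realFieldType) (m : nat) (p1 p2 : 'I_m.+1 -> R)
  (U1 U2 : {set {set 'I_m.+1}}) :
  prob_vector p1 -> prob_vector p2 ->
  (forall l, p1 l <= p1 ord0) -> (forall l, p2 l <= p2 ord0) ->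
  p2 ord0 <= p1 ord0 -> p1 ord0 <= 1 / 2 ->
  cross_intersecting U1 U2 ->
  prod_measure p1 U1 * prod_measure p2 U2 <= p1 ord0 * p2 ord0.
Proof.
move=> hp1 hp2 hm1 hm2 h21 h12 hc.
have hb : 0 < p2 ord0 by case/andP: (hp2 ord0).
have hb1 : forall l, 0 <= p1 l <= p1 ord0.
  by move=> l; case/andP: (hp1 l) => h _; rewrite (ltW h) hm1.
have hb2 : forall l, 0 <= p2 l <= p2 ord0.
  by move=> l; case/andP: (hp2 l) => h _; rewrite (ltW h) hm2.
have hR := main_ind hb h21 h12 hb1 hb2 hc.
have hq1 : forall l, 0 <= p1 l <= 1.
  by move=> l; case/andP: (hp1 l) => h h'; rewrite (ltW h) (ltW h').
have hq2 : forall l, 0 <= p2 l <= 1.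
  by move=> l; case/andP: (hp2 l) => h h'; rewrite (ltW h) (ltW h').
by apply: (Rinv_prod hb h21 h12 _ _ hR); apply: measure_ge0.
Qed.
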